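(* Let $\kappa>0$, let $Z$ be a $\kappa$-self-similar Markov process with transition function $P$, and let $(G_{s,t})_{0<s\le t}$ be a family of probability distributions on $(0,1]$ with $G_{s,s}=\delta_1$ satisfying $\int\int h(ab)G_{s,t}(\mathrm{d}a)G_{t,u}(\mathrm{d}b)=\int h(r)G_{s,u}(\mathrm{d}r)$ for all bounded measurable $h$ and $0<s\le t\le u$. Let $\widetilde P(0,t,0,\mathrm{d}y)=P(0,t,0,\mathrm{d}y)$ and $\widetilde P(s,t,x,\mathrm{d}y)=\int P(rt,t,(t/s)^{\kappa}r^{\kappa}x,\mathrm{d}y)\,G_{s,t}(\mathrm{d}r)$ for $0<s\le t$. If $G_{s,t}$ depends on $(s,t)$ only through $t/s$, then \[ \widetilde P(cs,ct,c^\kappa x,c^\kappa\,\mathrm{d}y)=\widetilde P(s,t,x,\mathrm{d}y)\qquad\text{for all } c>0,\ s\le t,\ x. \]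
   Context: $Z=(Z_t)_{t\ge0}$ is a real-valued càdlàg Markov process which is $\kappa$-self-similar: $(Z_{ct})_{t\ge0}\stackrel{d}{=}(c^\kappa Z_t)_{t\ge0}$ (finite-dimensional distributions) for all $c>0$. Its transition function $P(s,t,x,\mathrm{d}y)=\mathbb{P}(Z_t\in\mathrm{d}y\mid Z_s=x)$ satisfies $P(cs,ct,c^\kappa x,c^\kappa\,\mathrm{d}y)=P(s,t,x,\mathrm{d}y)$ for all $c>0$. For a measure $M$ and $c>0$, $M(c\,\mathrm{d}y)$ is defined by $\int g(y)M(c\,\mathrm{d}y)=\int g(y/c)M(\mathrm{d}y)$. *)

(* Defs.v *)
From HB Require Import structures.
From mathcomp Require Import all_boot all_order all_algebra.
From mathcomp Require Import all_classical all_reals all_analysis.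
From mathcomp Require Import measurable_realfun.
Set Implicit Arguments. Unset Strict Implicit. Unset Printing Implicit Defensive.
Import Order.TTheory GRing.Theory Num.Theory.
Local Open Scope classical_set_scope.
Local Open Scope ring_scope.

(* The measure M(c dy) evaluated on A is M(c A), where c A = image of A by y |-> c y. *)
Definition scale_set (R : realType) (c : R) (A : set R) : set R :=
  (fun y => c * y) @` A.

Definition transition_function (R : realType)
    (P : R -> R -> R -> probability R R) : Prop :=
  [/\ (forall s t A, 0 <= s <= t -> measurable A ->
         measurable_fun [set: R] (fun x : R => P s t x A)),
      (forall s x A, 0 <= s -> measurable A -> P s s x A = \d_x A) &
      (forall s t u x A, 0 <= s <= t -> t <= u -> measurable A ->
         P s u x A = (\int[P s t x]_y P t u y A)%E)].

Definition ss_transition (R : realType) (kappa : R)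
    (P : R -> R -> R -> probability R R) : Prop :=
  forall c s t x A, 0 < c -> 0 <= s <= t -> measurable A ->
    P (c * s) (c * t) (c `^ kappa * x) (scale_set (c `^ kappa) A) = P s t x A.

Definition G_family (R : realType) (G : R -> R -> probability R R) : Prop :=
  [/\ (forall s t, 0 < s <= t -> G s t `]0, 1]%classic = 1%E),
      (forall s A, 0 < s -> measurable A -> G s s A = \d_(1:R) A) &
      (forall s t u (h : R -> R), 0 < s <= t -> t <= u ->
         measurable_fun [set: R] h -> (exists M : R, forall r, `|h r| <= M) ->
         (\int[G s t]_a \int[G t u]_b (h (a * b))%:E)%E
           = (\int[G s u]_r (h r)%:E)%E)].

(* tilde P(s,t,x,A).  For s = 0 the paper only defines tilde P(0,t,0,.) = P(0,t,0,.);
   we use P(0,t,x,.) (only x = 0 is used in the theorem). *)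
Definition Ptilde (R : realType) (kappa : R)
    (P : R -> R -> R -> probability R R) (G : R -> R -> probability R R)
    (s t x : R) (A : set R) : \bar R :=
  if s == 0 then P 0 t x A
  else (\int[G s t]_r P (r * t)%R t ((t / s) `^ kappa * r `^ kappa * x)%R A)%E.

(* Main.v *)
Require Import Defs.
From HB Require Import structures.
From mathcomp Require Import all_boot all_order all_algebra.
From mathcomp Require Import all_classical all_reals all_analysis.
From mathcomp Require Import measurable_realfun.
From mathcomp Require Import ring.
Import Order.TTheory GRing.Theory Num.Theory.
Local Open Scope classical_set_scope.
Local Open Scope ring_scope.
Import HBNNSimple.

Lemma ae_full d (T : measurableType d) (R : realType)
  (mu : {measure set T -> \bar R}) (D : set T) (f : T -> \bar R) :
  measurable D -> mu (~` D) = 0%E -> (forall x, (0 <= f x)%E) ->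
  (\int[mu]_x f x = \int[mu]_(x in D) f x)%E.
Proof.
move=> mD muD f0.
have sE (h : {nnsfun T >-> R}) : sintegral mu (proj_nnsfun h mD) = sintegral mu h.
  rewrite -!integralT_nnsfun.
  rewrite [RHS](@ge0_negligible_integral _ _ _ mu setT (~` D)) //; last 3 first.
  - exact: measurableC.
  - exact/measurable_EFinP/measurable_funP.
  - by move=> x _; rewrite lee_fin.
  rewrite setTD setCK [RHS]integral_mkcond; apply: eq_integral => x _.
  rewrite /= patchE; case: ifPn => xD.
  by rewrite /mindic indicE xD mulr1.
  by rewrite /mindic indicE (negbTE xD) mulr0.
rewrite [RHS]integral_mkcond !ge0_integralTE //; last first.
  by move=> x; rewrite patchE; case: ifP.
apply/eqP; rewrite eq_le; apply/andP; split.
- apply: ge_ereal_sup => _ [h /= hf <-]; rewrite -(sE h); apply: ereal_sup_ubound.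
  exists (proj_nnsfun h mD) => //= x; rewrite patchE /mindic indicE.
  case: ifPn => xD /=; first by rewrite mulr1.
  by rewrite mulr0.
- apply: ge_ereal_sup => _ [h /= hf <-]; apply: ereal_sup_ubound.
  exists h => //= x; apply: (le_trans (hf x)); rewrite patchE.
  by case: ifP.
Qed.

Theorem proposition2p3 (R : realType) (kappa : R)
    (P : R -> R -> R -> probability R R) (G : R -> R -> probability R R) :
  0 < kappa ->
  transition_function P ->
  ss_transition kappa P ->
  G_family G ->
  (exists H : R -> probability R R, forall s t, 0 < s <= t -> G s t = H (t / s)) ->
  forall (c s t x : R) (A : set R), 0 < c -> 0 <= s <= t -> (s = 0 -> x = 0) ->
    measurable A ->
    Ptilde kappa P G (c * s) (c * t) (c `^ kappa * x) (scale_set (c `^ kappa) A)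
    = Ptilde kappa P G s t x A.
Proof.
move=> k0 _ ss [G1 _ _] [H GH] c s t x A c0 /andP[s0 st] sx mA.
rewrite /Ptilde mulf_eq0 (gt_eqF c0) /=.
have [s00|sn0] := eqVneq s 0.
  by rewrite /= sx // !mulr0 -(ss c 0 t 0 A c0) ?mulr0 // lexx /= (le_trans s0 st).
have sp : 0 < s by rewrite lt_neqAle eq_sym sn0.
have cst : 0 < c * s <= c * t by rewrite mulr_gt0 //= ler_pM2l.
have -> : G (c * s) (c * t) = G s t.
  rewrite GH // GH ?sp ?st //; congr H.
  by rewrite invfM mulrACA divff ?mul1r ?gt_eqF.
have mI : measurable (`]0, 1] : set R) by [].
have GC : G s t (~` `]0, 1]) = 0%E.
  by rewrite probability_setC // G1 ?sp ?st // subee.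
rewrite (@ae_full _ _ _ _ _ _ mI GC) //.
rewrite [RHS](@ae_full _ _ _ _ _ _ mI GC) //.
apply: eq_integral => r; rewrite inE /= in_itv /= => /andP[r0 r1].
have tp : 0 < t := lt_le_trans sp st.
have rt : 0 <= r * t <= t by rewrite mulr_ge0 ?(ltW r0) ?(ltW tp) //= ler_piMl // ltW.
rewrite -(ss c (r * t) t _ A c0 rt mA).
congr (P _ _ _ _); first by rewrite mulrCA.
have -> : c * t / (c * s) = t / s.
  by rewrite invfM mulrACA divff ?mul1r // gt_eqF.
ring.
Qed.
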